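(* Let $W$ be $\{0,1\}$-valued, let $x\in\mathbb X$ and $B\Subset\mathbb X$. Then \[ (\mathfrak h/B)(x)=\begin{cases}\{e\setminus B\mid e\in\mathfrak h(x)\}&\text{if }x\notin B,\\ \{\{x\}\}&\text{if }x\in B.\end{cases} \] In particular, $\{x\}\notin(\mathfrak h/B)(x)$ implies both $\deg_{\mathfrak h/B}(x)\le\deg_{\mathfrak h}(x)$ and $\{x\}\notin\mathfrak h$.
   Context: $\mathbb X$ is a finite or countably infinite set; $e\Subset\mathbb X$ means finite subset. $W:\{X\Subset\mathbb X\}\to\{0,1\}$ is a pure hard-core interaction, and $\mathfrak h=\{e\Subset\mathbb X\mid W(e)=0\}$. The conditional interaction is $W(X\mid B)=\prod_{C\subset B}W(X\cup C)$ if $X\cap B=\varnothing$, $W(X\mid B)=0$ if $X=\{y\}$ with $y\in B$, and $W(X\mid B)=1$ otherwise; it is again $\{0,1\}$-valued, and $\mathfrak h/B=\{e\Subset\mathbb X\mid W(e\mid B)=0\}$. For a set $\mathfrak g$ of finite subsets, $\mathfrak g(x)=\{e\in\mathfrak g\mid x\in e\}$ and $\deg_{\mathfrak g}(x)=|\mathfrak g(x)|\in\{0,1,2,\dots\}\cup\{\infty\}$. *)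

(* Defs.v *)
From HB Require Import structures.
From mathcomp Require Import all_boot all_algebra finmap.
From mathcomp Require Import boolp classical_sets cardinality.
Set Implicit Arguments. Unset Strict Implicit. Unset Printing Implicit Defensive.
Import GRing.Theory Num.Theory.

Local Open Scope ring_scope.

Definition cond_int (R : comPzRingType) (T : choiceType)
    (W : {fset T} -> R) (B X : {fset T}) : R :=
  if (X `&` B == fset0)%fset then \prod_(C <- fpowerset B) W (X `|` C)%fset
  else if has (fun y => X == [fset y]%fset) B then 0 else 1.

Definition hc (R : comPzRingType) (T : choiceType) (W : {fset T} -> R)
  : set {fset T} := [set e | W e = 0].

Definition hcond (R : comPzRingType) (T : choiceType) (W : {fset T} -> R)
  (B : {fset T}) : set {fset T} := [set e | cond_int W B e = 0].

(* g(x) = { e in g | x in e } ; deg_g(x) = |g(x)| (compared as cardinals). *)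
Definition star (T : choiceType) (g : set {fset T}) (x : T) : set {fset T} :=
  [set e | g e /\ x \in e].

(* Main.v *)
Require Import Defs.
From HB Require Import structures.
From mathcomp Require Import all_boot all_algebra finmap.
From mathcomp Require Import boolp classical_sets cardinality.
Import GRing.Theory Num.Theory.
Local Open Scope classical_set_scope.

Lemma key_cap0 (R : numDomainType) (T : choiceType) (W : {fset T} -> R)
  (B X : {fset T}) : (X `&` B == fset0)%fset ->
  (cond_int W B X = 0%R <-> exists2 C, (C `<=` B)%fset & W (X `|` C)%fset = 0%R).
Proof.
move=> h; rewrite /cond_int h; split.
  move/eqP; rewrite prodf_seq_eq0 => /hasP [C]; rewrite fpowersetE => CB /= /eqP.
  by exists C.
move=> [C CB WC]; apply/eqP; rewrite prodf_seq_eq0; apply/hasP; exists C.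
  by rewrite fpowersetE.
by rewrite /= WC.
Qed.

Lemma key_capN (R : numDomainType) (T : choiceType) (W : {fset T} -> R)
  (B X : {fset T}) : ~~ (X `&` B == fset0)%fset ->
  (cond_int W B X = 0%R <-> exists2 y, y \in B & X = [fset y]%fset).
Proof.
move=> h; rewrite /cond_int (negbTE h).
case: hasP => [[y yB /eqP ->]|nh]; split => //.
- by move=> _; exists y.
- by move/eqP; rewrite oner_eq0.
- by move=> [y yB e]; exfalso; apply: nh; exists y => //; apply/eqP.
Qed.

Theorem lemma5p3 (R : numDomainType) (T : countType) (W : {fset T} -> R)
  (hW : forall e, W e = 0%R \/ W e = 1%R) (x : T) (B : {fset T}) :
  (x \notin B ->
     star (hcond W B) x = [set (e `\` B)%fset | e in star (hc W) x]) /\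
  (x \in B -> star (hcond W B) x = [set [fset x]%fset]) /\
  (~ star (hcond W B) x [fset x]%fset ->
     (star (hcond W B) x #<= star (hc W) x)%card /\ ~ hc W [fset x]%fset).
Proof.
have P1 : x \notin B ->
     star (hcond W B) x = [set (e `\` B)%fset | e in star (hc W) x].
  move=> xB; apply/seteqP; split => e /=.
    move=> [he xe]; case: (boolP (e `&` B == fset0)%fset) => h.
      move/(key_cap0 _ _ _ _ _ h): he => [C CB WC].
      exists (e `|` C)%fset; first by split => //; rewrite in_fsetU xe.
      apply/fsetP => z; move/eqP/fsetP: h => /(_ z); rewrite !inE.
      have := fsubsetP CB z.
      by case: (z \in C); case: (z \in e); case: (z \in B) => //= ->.
    move/(key_capN _ _ _ _ _ h): he => [y yB ey]; move: xe; rewrite ey inE => /eqP xy.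
    by move: xB; rewrite xy yB.
  move=> [e' [We' xe'] <-]; split; last by rewrite in_fsetD xB xe'.
  have h : ((e' `\` B) `&` B == fset0)%fset.
    apply/eqP/fsetP => z; rewrite !inE; by case: (z \in B); rewrite ?andbF.
  apply/(key_cap0 _ _ _ _ _ h); exists (e' `&` B)%fset; first exact: fsubsetIr.
  suff -> : ((e' `\` B) `|` (e' `&` B))%fset = e' by [].
  apply/fsetP => z; rewrite !inE.
  by case: (z \in B); case: (z \in e').
have P2 : x \in B -> star (hcond W B) x = [set [fset x]%fset].
  move=> xB; apply/seteqP; split => e /=.
    move=> [he xe].
    have h : ~~ (e `&` B == fset0)%fset.
      by apply/negP => /eqP/fsetP/(_ x); rewrite !inE xe xB.
    move/(key_capN _ _ _ _ _ h): he => [y yB ey]; move: xe; rewrite ey inE => /eqP ->.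
    by [].
  move=> ->; split; last by rewrite inE.
  have h : ~~ ([fset x] `&` B == fset0)%fset.
    by apply/negP => /eqP/fsetP/(_ x); rewrite !inE eqxx xB.
  by apply/(key_capN _ _ _ _ _ h); exists x.
split => //; split => //.
move=> nx.
have xB : x \notin B.
  by apply/negP => xB; apply: nx; rewrite (P2 xB).
rewrite (P1 xB); split; first exact: card_image_le.
move=> hx; apply: nx; rewrite (P1 xB); exists [fset x]%fset.
  by split => //; rewrite inE.
apply/fsetP => z; rewrite !inE.
by case: (boolP (z == x)) => [/eqP ->|]; rewrite ?(negbTE xB) ?andbF.
Qed.
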